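(* For $a,b\ge0$ let $p_\bullet(a,b)=(p_k(a,b))_{k\in\mathbb{Z}}:=\mathrm{Poi}_a*\widehat{\mathrm{Poi}}_b$, i.e. $p_k(a,b)=\mathbb{P}(X-Y=k)$ for independent $X\sim\mathrm{Poi}_a$, $Y\sim\mathrm{Poi}_b$. Then for all $k\in\mathbb{Z}$, \[ \sqrt{p_k(a,b)\,p_{-k}(a,b)}=e^{-(\sqrt a-\sqrt b)^2}\,p_k\big(\sqrt{ab},\sqrt{ab}\big). \]
   Context: $\mathrm{Poi}_\lambda$ is the Poisson distribution with parameter $\lambda$, with $\mathrm{Poi}_0$ the point mass at $0$; $\widehat{\mathrm{Poi}}_b$ is its image under $k\mapsto-k$. *)

(* Defs.v *)
From Stdlib Require Import Reals ZArith Lra Lia.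
From Coquelicot Require Import Coquelicot.
Open Scope R_scope.

(* Poisson pmf with parameter lam >= 0 at n : nat; for lam = 0 this is the
   point mass at 0 since 0^0 = 1 for Stdlib's pow. *)
Definition poi (lam : R) (n : nat) : R := exp (- lam) * lam ^ n / INR (fact n).

Definition poiZ (lam : R) (z : Z) : R :=
  if (z <? 0)%Z then 0 else poi lam (Z.to_nat z).

(* p_k(a,b) = P(X - Y = k), X ~ Poi_a, Y ~ Poi_b independent:
   sum over the value m of Y of P(X = k + m) P(Y = m). *)
Definition pk (a b : R) (k : Z) : R :=
  Series (fun m : nat => poiZ a (k + Z.of_nat m)%Z * poi b m).

(* Main.v *)
Require Import Defs.
From Stdlib Require Import Reals ZArith.
From Coquelicot Require Import Coquelicot.
From Stdlib Require Import Lra Lia.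
Open Scope R_scope.

Lemma Series_nonneg (a : nat -> R) : (forall n, 0 <= a n) -> 0 <= Series a.
Proof.
  intros H. unfold Series.
  assert (Hle : Rbar_le (Lim_seq (fun _ => 0)) (Lim_seq (sum_n a))).
  { apply Lim_seq_le_loc. exists O. intros N _.
    induction N. rewrite sum_O; apply H.
    rewrite sum_Sn. change (plus (sum_n a N) (a (S N))) with (sum_n a N + a (S N)).
    specialize (H (S N)). lra. }
  rewrite Lim_seq_const in Hle.
  destruct (Lim_seq (sum_n a)); simpl in *; lra.
Qed.

Lemma sum_shift (a : nat -> R) n : (forall i, (i < n)%nat -> a i = 0) ->
  forall N, sum_n a (N + n) = sum_n (fun j => a (n + j)%nat) N.
Proof.
  intros H N. induction N.
  - simpl. rewrite (sum_O (fun j => a (n + j)%nat)). rewrite Nat.add_0_r.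
    destruct n. rewrite sum_O. reflexivity.
    rewrite sum_Sn.
    assert (Z : sum_n a n = 0).
    { clear -H. assert (forall m, (m <= n)%nat -> sum_n a m = 0).
      { induction m; intros Hm. rewrite sum_O; apply H; lia.
        rewrite sum_Sn, IHm by lia. rewrite (H (S m)) by lia.
        change (plus 0 0) with (0 + 0). lra. }
      apply H0; lia. }
    rewrite Z. change (plus 0 (a (S n))) with (0 + a (S n)). lra.
  - simpl. rewrite !sum_Sn, IHN. f_equal. f_equal. lia.
Qed.

Lemma Series_shift (a : nat -> R) n : (forall i, (i < n)%nat -> a i = 0) ->
  Series a = Series (fun j => a (n + j)%nat).
Proof.
  intros H. unfold Series. rewrite <- (Lim_seq_incr_n (sum_n a) n).
  f_equal. apply Lim_seq_ext. intros N. apply sum_shift; auto.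
Qed.

Definition T (n : nat) (x : R) : R :=
  Series (fun m => x ^ m / (INR (fact (n + m)) * INR (fact m))).

Lemma poiZ_nat lam j : poiZ lam (Z.of_nat j) = poi lam j.
Proof.
  unfold poiZ. destruct (Z.ltb_spec (Z.of_nat j) 0). lia.
  rewrite Nat2Z.id. reflexivity.
Qed.

Lemma exp_ab a b : exp (- a - b) = exp (- a) * exp (- b).
Proof. rewrite <- exp_plus. f_equal. Qed.

Lemma pk_pos a b n : pk a b (Z.of_nat n) = exp (- a - b) * a ^ n * T n (a * b).
Proof.
  unfold pk, T. rewrite <- Series_scal_l. apply Series_ext. intros m.
  rewrite <- Nat2Z.inj_add, poiZ_nat. unfold poi.
  rewrite pow_add, Rpow_mult_distr, exp_ab.
  assert (INR (fact (n + m)) <> 0) by apply INR_fact_neq_0.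
  assert (INR (fact m) <> 0) by apply INR_fact_neq_0.
  field; auto.
Qed.

Lemma pk_neg a b n : pk a b (- Z.of_nat n)%Z = exp (- a - b) * b ^ n * T n (a * b).
Proof.
  unfold pk, T. rewrite (Series_shift _ n).
  2:{ intros i Hi. unfold poiZ. destruct (Z.ltb_spec (- Z.of_nat n + Z.of_nat i) 0).
      ring. lia. }
  rewrite <- Series_scal_l. apply Series_ext. intros m.
  replace (- Z.of_nat n + Z.of_nat (n + m))%Z with (Z.of_nat m) by lia.
  rewrite poiZ_nat. unfold poi.
  rewrite pow_add, Rpow_mult_distr, exp_ab.
  assert (INR (fact (n + m)) <> 0) by apply INR_fact_neq_0.
  assert (INR (fact m) <> 0) by apply INR_fact_neq_0.
  field; auto.
Qed.

Lemma T_nonneg n x : 0 <= x -> 0 <= T n x.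
Proof.
  intros Hx. apply Series_nonneg. intros m.
  apply Rmult_le_pos. apply pow_le; auto.
  apply Rlt_le, Rinv_0_lt_compat, Rmult_lt_0_compat; apply INR_fact_lt_0.
Qed.

Lemma main_nat (a b : R) (ha : 0 <= a) (hb : 0 <= b) n :
  sqrt ((exp (- a - b) * a ^ n * T n (a * b)) * (exp (- a - b) * b ^ n * T n (a * b))) =
  exp (- (sqrt a - sqrt b) ^ 2) *
   (exp (- sqrt (a * b) - sqrt (a * b)) * sqrt (a * b) ^ n * T n (sqrt (a * b) * sqrt (a * b))).
Proof.
  set (c := sqrt (a * b)).
  assert (Hab : 0 <= a * b) by nra.
  assert (Hcc : c * c = a * b) by (apply sqrt_sqrt; auto).
  assert (Hc : 0 <= c) by apply sqrt_pos.
  rewrite Hcc.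
  assert (Hc2 : c = sqrt a * sqrt b) by (apply sqrt_mult; auto).
  assert (Ha2 : sqrt a * sqrt a = a) by (apply sqrt_sqrt; auto).
  assert (Hb2 : sqrt b * sqrt b = b) by (apply sqrt_sqrt; auto).
  assert (E : exp (- (sqrt a - sqrt b) ^ 2) * exp (- c - c) = exp (- a - b)).
  { rewrite <- exp_plus. f_equal. rewrite Hc2. nra. }
  set (t := T n (a * b)).
  assert (Ht : 0 <= t) by (apply T_nonneg; auto).
  set (e := exp (- a - b)).
  assert (He : 0 < e) by apply exp_pos.
  replace (e * a ^ n * t * (e * b ^ n * t)) with ((e * c ^ n * t) * (e * c ^ n * t)).
  2:{ assert (P: a^n*b^n = c^n*c^n) by (rewrite <- !Rpow_mult_distr, Hcc; reflexivity).
      transitivity (e*e*t*t*(a^n*b^n)); [rewrite P; ring | ring]. }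
  rewrite sqrt_square.
  2:{ apply Rmult_le_pos; [apply Rmult_le_pos|]; auto; [lra| apply pow_le; auto]. }
  rewrite <- Rmult_assoc, <- Rmult_assoc, E. fold e. ring.
Qed.

Theorem lemma1 (a b : R) (ha : 0 <= a) (hb : 0 <= b) (k : Z) :
  sqrt (pk a b k * pk a b (- k)%Z) =
  exp (- (sqrt a - sqrt b) ^ 2) * pk (sqrt (a * b)) (sqrt (a * b)) k.
Proof.
  destruct (Z_le_gt_dec 0 k) as [Hk | Hk].
  - replace k with (Z.of_nat (Z.to_nat k)) by lia.
    rewrite pk_pos, pk_neg, pk_pos. apply main_nat; auto.
  - replace k with (- Z.of_nat (Z.to_nat (- k)))%Z by lia.
    rewrite Z.opp_involutive, pk_pos, pk_neg, pk_neg. rewrite Rmult_comm.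
    apply main_nat; auto.
Qed.
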